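(* Let $\mathcal{V}$ be a variety of groups and $m\ge 0$ such that the relatively free group $F_{m+1}(\mathcal{V})$ is infinite. Then the subgroup of $F_{m+1}(\mathcal{V})$ generated by $m$ of the $m+1$ free generators (which is naturally isomorphic to $F_m(\mathcal{V})$) has infinite index in $F_{m+1}(\mathcal{V})$.
   Context: For a variety $\mathcal{V}$ and cardinal $k$, $F_k(\mathcal{V})$ is the $\mathcal{V}$-free group of rank $k$, i.e., $F_k/V(F_k)$ where $F_k$ is the absolutely free group of rank $k$ and $V(F_k)$ its verbal subgroup for $\mathcal{V}$. *)

(* Defs.v *)
From mathcomp Require Import all_boot.
Set Implicit Arguments. Unset Strict Implicit. Unset Printing Implicit Defensive.

(* Group words (terms of the signature of groups) over a set X of variables.
   The absolutely free group F(X) is gword X modulo the group axioms. *)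
Inductive gword (X : Type) : Type :=
| gvar : X -> gword X
| gone : gword X
| gmul : gword X -> gword X -> gword X
| ginv : gword X -> gword X.
Arguments gone {X}.

Fixpoint gsubst (X Y : Type) (s : X -> gword Y) (w : gword X) : gword Y :=
  match w with
  | gvar x => s x
  | gone => gone
  | gmul u v => gmul (gsubst s u) (gsubst s v)
  | ginv u => ginv (gsubst s u)
  end.

Fixpoint gvars_in (X : Type) (P : X -> Prop) (w : gword X) : Prop :=
  match w with
  | gvar x => P x
  | gone => True
  | gmul u v => gvars_in P u /\ gvars_in P v
  | ginv u => gvars_in P u
  end.

(* A variety of groups is given by a set of laws, i.e. words in countably many
   variables x_0, x_1, ... *)
Definition variety := gword nat -> Prop.

(* veq V u v : u and v represent the same element of F_X / V(F_X), i.e. the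
   smallest congruence containing the group axioms and all values w(s) = 1
   of laws w of V (the verbal subgroup V(F_X)). *)
Inductive veq (V : variety) (X : Type) : gword X -> gword X -> Prop :=
| veq_refl u : veq V u u
| veq_sym u v : veq V u v -> veq V v u
| veq_trans u v w : veq V u v -> veq V v w -> veq V u w
| veq_mul u u' v v' : veq V u u' -> veq V v v' -> veq V (gmul u v) (gmul u' v')
| veq_inv u u' : veq V u u' -> veq V (ginv u) (ginv u')
| veq_assoc u v w : veq V (gmul (gmul u v) w) (gmul u (gmul v w))
| veq_mul1l u : veq V (gmul gone u) u
| veq_mul1r u : veq V (gmul u gone) u
| veq_mulVl u : veq V (gmul (ginv u) u) gone
| veq_mulVr u : veq V (gmul u (ginv u)) gone
| veq_law (w : gword nat) (s : nat -> gword X) : V w -> veq V (gsubst s w) gone.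

(* The V-free group of rank k, F_k(V), is gword 'I_k modulo veq V;
   its free generators are the gvar i, i : 'I_k. *)

Definition relfree_infinite (V : variety) (k : nat) : Prop :=
  ~ exists (n : nat) (r : 'I_n -> gword 'I_k),
      forall x : gword 'I_k, exists i : 'I_n, veq V x (r i).

Definition in_gen_subgroup (V : variety) (k : nat) (P : 'I_k -> Prop)
    (x : gword 'I_k) : Prop :=
  exists h : gword 'I_k, gvars_in P h /\ veq V x h.

Definition infinite_index_gen (V : variety) (k : nat) (P : 'I_k -> Prop) : Prop :=
  ~ exists (n : nat) (r : 'I_n -> gword 'I_k),
      forall x : gword 'I_k, exists (i : 'I_n) (h : gword 'I_k),
        in_gen_subgroup V P h /\ veq V x (gmul (r i) h).

(* Main.v *)
Require Import Defs.
From mathcomp Require Import all_boot all_fingroup.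
From Stdlib Require Import List.
Set Implicit Arguments. Unset Strict Implicit. Unset Printing Implicit Defensive.

Lemma gsubst_comp (X Y Z : Type) (s : Y -> gword Z) (t : X -> gword Y) w :
  gsubst s (gsubst t w) = gsubst (fun x => gsubst s (t x)) w.
Proof. by elim: w => [x| |u /= -> v ->|u /= ->]. Qed.

Lemma gsubst_ext (X Y : Type) (s t : X -> gword Y) w :
  (forall x, s x = t x) -> gsubst s w = gsubst t w.
Proof. move=> H; elim: w => [x| |u /= -> v ->|u /= ->] //=. Qed.

Lemma gsubst_id_in (X : Type) (P : X -> Prop) (s : X -> gword X) w :
  (forall x, P x -> s x = gvar x) -> gvars_in P w -> gsubst s w = w.
Proof.
move=> H; elim: w => [x Px| _|u IHu v IHv [Pu Pv]|u IHu Pu] /=; first exact: H; first done.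
  by rewrite IHu // IHv.
by rewrite IHu.
Qed.

Lemma gsubst_var (X : Type) (w : gword X) : gsubst (@gvar X) w = w.
Proof. by elim: w => [x| |u /= -> v ->|u /= ->]. Qed.

Section V.
Variable V : variety.

Lemma veq_subst (X Y : Type) (s : X -> gword Y) u v :
  veq V u v -> veq V (gsubst s u) (gsubst s v).
Proof.
elim=> /=; try by econstructor; eauto.
move=> w t Vw; rewrite gsubst_comp; exact: veq_law.
Qed.

Lemma veq_cancel (X : Type) (a b : gword X) :
  veq V (gmul (ginv a) (gmul a b)) b.
Proof.
apply: veq_trans (veq_sym (veq_assoc V _ _ _)) _.
apply: veq_trans (veq_mul1l V b).
apply: veq_mul; [exact: veq_mulVl | exact: veq_refl].
Qed.

Lemma veq_kill_all (X : Type) (w : gword X) :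
  veq V (gsubst (fun _ => (gone : gword X)) w) gone.
Proof.
elim: w => /= [x|||u IH]; first exact: veq_refl.
- exact: veq_refl.
- move=> u IHu v IHv; apply: veq_trans (veq_mul IHu IHv) (veq_mul1l V _).
- apply: veq_trans (veq_inv IH) _.
  apply: veq_trans (veq_sym (veq_mul1r V _)) (veq_mulVl V _).
Qed.

Variable m : nat.
Notation W := (gword 'I_m.+1).

Definition cover (f : W -> W) := exists l : list W,
  forall x, exists a, List.In a l /\ veq V x (gmul a (f x)).

Definition kill1 (k : 'I_m.+1) (i : 'I_m.+1) : W :=
  if i == k then gone else gvar i.
Definition killk (k : nat) (i : 'I_m.+1) : W :=
  if (i < k)%N then gone else gvar i.

Lemma in_seq_In (T : eqType) (x : T) (s : list T) : x \in s -> List.In x s.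
Proof.
elim: s => //= y s IH; rewrite seq.in_cons => /orP [/eqP ->|/IH]; by auto.
Qed.

Lemma cover_j (j : 'I_m.+1) :
  (exists (n : nat) (r : 'I_n -> gword 'I_m.+1),
      forall x : gword 'I_m.+1, exists (i : 'I_n) (h : gword 'I_m.+1),
        in_gen_subgroup V (fun i : 'I_m.+1 => i <> j) h /\ veq V x (gmul (r i) h)) ->
  cover (gsubst (kill1 j)).
Proof.
move=> [n [r Hr]].
exists (List.map (fun i => gmul (r i) (ginv (gsubst (kill1 j) (r i)))) (enum 'I_n)).
move=> x; have [i [h [[h' [Ph' Hh]] Hx]]] := Hr x.
exists (gmul (r i) (ginv (gsubst (kill1 j) (r i)))); split.
  by apply: List.in_map; apply: in_seq_In; rewrite mem_enum.
have Hxh : veq V x (gmul (r i) h') := veq_trans Hx (veq_mul (veq_refl V _) Hh).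
have Eh : gsubst (kill1 j) h' = h'.
  apply: gsubst_id_in Ph' => y Hy; rewrite /kill1; case: eqP => //.
have Hp := veq_subst (kill1 j) Hxh; rewrite /= Eh in Hp.
apply: veq_trans Hxh _.
apply: veq_sym; apply: veq_trans (veq_assoc V _ _ _) _.
apply: veq_mul; first exact: veq_refl.
apply: veq_trans (veq_mul (veq_refl V _) Hp) _.
exact: veq_cancel.
Qed.

Lemma cover_swap (j k : 'I_m.+1) :
  cover (gsubst (kill1 j)) -> cover (gsubst (kill1 k)).
Proof.
move=> [l Hl]; pose s := fun i : 'I_m.+1 => (gvar (tperm j k i) : W).
exists (List.map (gsubst s) l) => x.
have [a [Ina Ha]] := Hl (gsubst s x).
exists (gsubst s a); split; first exact: List.in_map.
have H := veq_subst s Ha; move: H => /=.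
have -> : gsubst s (gsubst s x) = x.
  rewrite gsubst_comp -[RHS]gsubst_var; apply: gsubst_ext => i.
  by rewrite /s /= tpermK.
have -> : gsubst s (gsubst (kill1 j) (gsubst s x)) = gsubst (kill1 k) x.
  rewrite !gsubst_comp; apply: gsubst_ext => i /=.
  rewrite /s /kill1 /=.
  have -> : (tperm j k i == j) = (i == k).
    by rewrite -[X in _ == X](tpermR j k) (inj_eq (@perm_inj _ (tperm j k))).
  by case: (i == k) => //=; rewrite tpermK.
done.
Qed.

Lemma cover_killk (hj : forall k, cover (gsubst (kill1 k))) :
  forall k, (k <= m.+1)%N -> cover (gsubst (killk k)).
Proof.
elim=> [_|k IH Hk].
  exists (gone :: nil) => x; exists gone; split; first by left.
  rewrite (@gsubst_ext _ _ _ (@gvar _)) ?gsubst_var; first exact: veq_sym (veq_mul1l V _).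
  by move=> i; rewrite /killk.
have [l1 H1] := IH (ltnW Hk).
have [l2 H2] := hj (Ordinal Hk).
exists (List.flat_map (fun a => List.map (fun b => gmul a b) l2) l1) => x.
have [a [Ina Ha]] := H1 x.
have [b [Inb Hb]] := H2 (gsubst (killk k) x).
have E : gsubst (kill1 (Ordinal Hk)) (gsubst (killk k) x) = gsubst (killk k.+1) x.
  rewrite gsubst_comp; apply: gsubst_ext => i; rewrite /killk /kill1.
  case: (ltnP i k) => Hik /=; first by rewrite ltnS ltnW.
  have -> : (i == Ordinal Hk) = (nat_of_ord i == k) by [].
  by rewrite ltnS eqn_leq Hik andbT.
rewrite E in Hb.
exists (gmul a b); split.
  by apply/List.in_flat_map; exists a; split => //; apply: List.in_map.
apply: veq_trans Ha _.
apply: veq_trans (veq_mul (veq_refl V _) Hb) (veq_sym (veq_assoc V _ _ _)).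
Qed.

End V.

Theorem mainTheorem8 (V : variety) (m : nat) :
  relfree_infinite V m.+1 ->
  forall j : 'I_m.+1,
    infinite_index_gen V (fun i : 'I_m.+1 => i <> j).
Proof.
move=> Hinf j Hfin; apply: Hinf.
have Hj := cover_j Hfin.
have [l Hl] := cover_killk (fun k => cover_swap k Hj) (leqnn m.+1).
exists (length l), (fun i => List.nth i l gone) => x.
have [a [Ina Ha]] := Hl x.
have [i [Hi Ei]] := List.In_nth l a gone Ina.
exists (Ordinal (introT ltP Hi)); rewrite /= Ei.
apply: veq_trans Ha _.
apply: veq_trans (veq_mul (veq_refl V _) _) (veq_mul1r V _).
rewrite (@gsubst_ext _ _ _ (fun _ => gone)); first exact: veq_kill_all.
by move=> i'; rewrite /killk ltn_ord.
Qed.
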